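(* Assume $\chi=\chi_1\chi_2^{-1}$ is weakly generic. Let $\sigma=\sigma_{a,b}\in W^{\exp}(\chi_1\oplus\chi_2)$ be such that $\mathcal{S}(\chi_1,\chi_2,\sigma)$ is non-empty, and let $(J,x)$ be its unique maximal element. Define $c_\tau=n_\tau+e-1-2x_\tau$ for $\tau\in\Sigma$ (so $c_\tau\in[1,p-1]$) and $r=r(J,c)$. Then $a_\tau-b_\tau+1=r_\tau$ for all $\tau$, except in the following two cases: (i) $J=\Sigma$, $n_\tau=e$ and $x_\tau=e-1$ for all $\tau$; (ii) $J=\varnothing$, $n_\tau=p-1-e$ and $x_\tau=0$ for all $\tau$. In cases (i) and (ii) there is the additional possibility that $a_\tau-b_\tau+1=p$ for all $\tau$ (and otherwise $a_\tau-b_\tau+1=r_\tau$ for all $\tau$). Furthermore, $r(J,c)$ is independent of the choice of $\tau_0$ in its definition.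
   Context: Let $p$ be a prime and $K/\mathbf{Q}_p$ finite with residue field $k$, residue degree $f$ and ramification index $e$; $I_K$ is the inertia subgroup of $G_K$. Fix a uniformiser $\pi$ and $\varpi\in\overline{K}$ with $\varpi^{p^f-1}=\pi$; $\omega\colon G_K\to k^\times$ sends $g$ to the reduction of $g(\varpi)/\varpi$. Let $\Sigma=\mathrm{Hom}_{\mathbf{F}_p}(k,\overline{\mathbf{F}}_p)$, $\varphi(x)=x^p$ on $k$, $\omega_\tau=\tau\circ\omega$. For $a\in\mathbf{Z}^\Sigma$, $\Omega_{\tau,a}=\sum_{i=0}^{f-1}p^ia_{\tau\circ\varphi^i}$. $\chi_1,\chi_2\colon G_K\to\overline{\mathbf{F}}_p^\times$ are continuous characters, $\chi=\chi_1\chi_2^{-1}=\psi\prod_\tau\omega_\tau^{n_\tau}$ with $\psi$ unramified, $n_\tau\in[1,p]$, some $n_\tau<p$ (this determines $n$). Weakly generic: $n_\tau\in[e,p-e]$ for all $\tau$. Serre weight $\sigma_{a,b}=\bigotimes_\tau(\det^{b_\tau}\otimes\mathrm{Sym}^{a_\tau-b_\tau}k^2)\otimes_{k,\tau}\overline{\mathbf{F}}_p$ for $a,b\in\mathbf{Z}^\Sigma$ with $a_\tau-b_\tau\in[0,p-1]$; $\sigma_{a,b}\cong\sigma_{a',b'}$ iff $a-b=a'-b'$ and $\Omega_{\tau,b}\equiv\Omega_{\tau,b'}\pmod{p^f-1}$. $W^{\exp}(\chi_1\oplus\chi_2)$: $\sigma_{a,b}$ belongs to it iff there exist $J\subseteq\Sigma$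 and $x_\tau\in[0,e-1]$ with $(\chi_1\oplus\chi_2)|_{I_K}\cong\prod_{\tau\in J}\omega_\tau^{a_\tau+1+x_\tau}\prod_{\tau\notin J}\omega_\tau^{b_\tau+x_\tau}\oplus\prod_{\tau\notin J}\omega_\tau^{a_\tau+e-x_\tau}\prod_{\tau\in J}\omega_\tau^{b_\tau+e-1-x_\tau}$. $\mathcal{S}(\chi_1,\chi_2,\sigma)$: pairs $(J,x)$, $J\subseteq\Sigma$, $x_\tau\in[0,e-1]$, with $\chi_1|_{I_K}=\prod_{\tau\in J}\omega_\tau^{a_\tau+1+x_\tau}\prod_{\tau\notin J}\omega_\tau^{b_\tau+x_\tau}$ and $\chi_2|_{I_K}=\prod_{\tau\notin J}\omega_\tau^{a_\tau+e-x_\tau}\prod_{\tau\in J}\omega_\tau^{b_\tau+e-1-x_\tau}$. With $s(J,x)_\tau=a_\tau-b_\tau+1+x_\tau$ ($\tau\in J$), $=x_\tau$ ($\tau\notin J$), order by $(J,x)\preceq(J',x')$ iff $\Omega_{\tau,s(J',x')-s(J,x)}\in(p^f-1)\mathbf{Z}_{\ge0}$ for all $\tau$; a non-empty $\mathcal{S}$ has a unique maximal element. $\delta_J$ and $r(J,c)$: for $(x,\tau)\in\mathbf{Z}^\Sigma\times\Sigma$, $y=\delta_J(x,\tau)$ equals $x$ if $1\le x_\tau\le p$; if $x_\tau\le0$ (resp. $x_\tau>p$) then $y_\tau=x_\tau+p$ (resp. $x_\tau-p$), $y_{\tau\circ\varphi}=x_{\tau\circ\varphi}-1$ if $\tau\circ\varphi\notin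 J$ and $x_{\tau\circ\varphi}+1$ if $\tau\circ\varphi\in J$, other entries unchanged. For $c_\tau\in[1,p-1]$ let $y_{0,\tau}=c_\tau$, $c_\tau+1$, $p-c_\tau$, $p-1-c_\tau$ according as ($\tau\in J,\tau\circ\varphi^{-1}\in J$), ($\tau\in J,\tau\circ\varphi^{-1}\notin J$), ($\tau\notin J,\tau\circ\varphi^{-1}\in J$), ($\tau\notin J,\tau\circ\varphi^{-1}\notin J$). If all $y_{0,\tau}>0$, $r(J,c)=y_0$; otherwise choose $\tau_0$ with $y_{0,\tau_0}=0$, put $y_\kappa=\delta_J(y_{\kappa-1},\tau_0\circ\varphi^{\kappa-1})$ for $\kappa=1,\dots,f$, and $r(J,c)=y_f$. *)

(* Defs.v *)
From HB Require Import structures.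
From mathcomp Require Import all_boot all_order all_algebra.
Set Implicit Arguments. Unset Strict Implicit. Unset Printing Implicit Defensive.
Import Order.TTheory GRing.Theory Num.Theory.
Local Open Scope ring_scope.

(* Sigma = Hom(k, Fpbar) is parametrised by 'I_f : index i stands for
   tau_i := tau0 \o phi^i.  Then tau_i \o phi = tau_{i+1 mod f} (ordS),
   tau_i \o phi^{-1} = tau_{i-1 mod f} (ord_pred). *)

Definition phi_shift (f : nat) (i : nat) (t : 'I_f) : 'I_f := iter i (@ordS f) t.

Definition Omega (p f : nat) (a : 'I_f -> int) (t : 'I_f) : int :=
  \sum_(i < f) (p ^ i)%N%:Z * a (phi_shift i t).

(* omega_{tau_i}(g) = tau0 \o phi^i (omega g) *)
Definition omega_tau (k L : fieldType) (tau0 : {rmorphism k -> L}) (p f : nat)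
  (G : Type) (om : G -> k) (i : 'I_f) (g : G) : L :=
  tau0 (om g ^+ (p ^ i)%N).

Definition omprod (k L : fieldType) (tau0 : {rmorphism k -> L}) (p f : nat)
  (G : Type) (om : G -> k) (A : {set 'I_f}) (m : 'I_f -> int) (g : G) : L :=
  \prod_(i in A) (omega_tau tau0 p om i g) ^ (m i).

(* continuous character G -> Fpbar^x (G abstract) *)
Definition is_char (L : fieldType) (G : Type) (mulG : G -> G -> G) (chi : G -> L) :=
  (forall g, chi g != 0) /\ (forall g h, chi (mulG g h) = chi g * chi h).

Definition diag2 (L : fieldType) (G : Type) (al be : G -> L) (g : G) : 'M[L]_2 :=
  diag_mx (\row_(i < 2) (if i == ord0 then al g else be g)).

Definition rep_iso (L : fieldType) (G : Type) (I : G -> Prop) (r1 r2 : G -> 'M[L]_2) :=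
  exists2 P : 'M[L]_2, P \in unitmx & forall g, I g -> P *m r1 g = r2 g *m P.

Definition ch1 (k L : fieldType) (tau0 : {rmorphism k -> L}) (p f : nat)
  (G : Type) (om : G -> k) (a b : 'I_f -> int) (J : {set 'I_f}) (x : 'I_f -> int) (g : G) : L :=
  omprod tau0 p om J (fun t => a t + 1 + x t) g * omprod tau0 p om (~: J) (fun t => b t + x t) g.

Definition ch2 (k L : fieldType) (tau0 : {rmorphism k -> L}) (p f e : nat)
  (G : Type) (om : G -> k) (a b : 'I_f -> int) (J : {set 'I_f}) (x : 'I_f -> int) (g : G) : L :=
  omprod tau0 p om (~: J) (fun t => a t + e%:Z - x t) g
  * omprod tau0 p om J (fun t => b t + e%:Z - 1 - x t) g.

Definition x_ok (f e : nat) (x : 'I_f -> int) := forall t, 0 <= x t <= e%:Z - 1.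

Definition in_Wexp (k L : fieldType) (tau0 : {rmorphism k -> L}) (p f e : nat)
  (G : Type) (I : G -> Prop) (om : G -> k) (chi1 chi2 : G -> L) (a b : 'I_f -> int) :=
  exists J : {set 'I_f}, exists x : 'I_f -> int, x_ok e x /\
    rep_iso I (diag2 chi1 chi2) (diag2 (ch1 tau0 p om a b J x) (ch2 tau0 p e om a b J x)).

Definition in_S (k L : fieldType) (tau0 : {rmorphism k -> L}) (p f e : nat)
  (G : Type) (I : G -> Prop) (om : G -> k) (chi1 chi2 : G -> L) (a b : 'I_f -> int)
  (J : {set 'I_f}) (x : 'I_f -> int) :=
  x_ok e x /\
  (forall g, I g -> chi1 g = ch1 tau0 p om a b J x g) /\
  (forall g, I g -> chi2 g = ch2 tau0 p e om a b J x g).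

Definition sJx (f : nat) (a b : 'I_f -> int) (J : {set 'I_f}) (x : 'I_f -> int) (t : 'I_f) : int :=
  if t \in J then a t - b t + 1 + x t else x t.

Definition leS (p f : nat) (a b : 'I_f -> int) (J : {set 'I_f}) (x : 'I_f -> int)
  (J' : {set 'I_f}) (x' : 'I_f -> int) :=
  forall t, 0 <= Omega p (fun u => sJx a b J' x' u - sJx a b J x u) t /\
            ((p ^ f - 1)%N%:Z %| Omega p (fun u => sJx a b J' x' u - sJx a b J x u) t)%Z.

Definition maxS (f : nat) (P : {set 'I_f} -> ('I_f -> int) -> Prop)
  (le : {set 'I_f} -> ('I_f -> int) -> {set 'I_f} -> ('I_f -> int) -> Prop)
  (J : {set 'I_f}) (x : 'I_f -> int) :=
  P J x /\ forall J' x', P J' x' -> le J x J' x' -> J' = J /\ (forall t, x' t = x t).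

Definition unique_maxS (f : nat) (P : {set 'I_f} -> ('I_f -> int) -> Prop)
  (le : {set 'I_f} -> ('I_f -> int) -> {set 'I_f} -> ('I_f -> int) -> Prop)
  (J : {set 'I_f}) (x : 'I_f -> int) :=
  maxS P le J x /\
  forall J' x', maxS P le J' x' -> J' = J /\ (forall t, x' t = x t).

Definition y0 (p f : nat) (J : {set 'I_f}) (c : 'I_f -> int) (t : 'I_f) : int :=
  if t \in J then (if ord_pred t \in J then c t else c t + 1)
  else (if ord_pred t \in J then p%:Z - c t else p%:Z - 1 - c t).

(* delta_J(y, t); when f = 1 (t \o phi = t) both modifications are added *)
Definition deltaJ (p f : nat) (J : {set 'I_f}) (y : 'I_f -> int) (t : 'I_f) : 'I_f -> int :=
  fun u =>
    if (1 <= y t) && (y t <= p%:Z) then y u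
    else y u + (if u == t then (if y t <= 0 then p%:Z else - p%:Z) else 0)
             + (if u == ordS t then (if ordS t \in J then 1 else -1) else 0).

Fixpoint ysteps (p f : nat) (J : {set 'I_f}) (c : 'I_f -> int) (t0 : 'I_f) (kap : nat)
  : 'I_f -> int :=
  match kap with
  | 0%N => y0 p J c
  | kap'.+1 => deltaJ p J (ysteps p J c t0 kap') (phi_shift kap' t0)
  end.

Definition rJc (p f : nat) (J : {set 'I_f}) (c : 'I_f -> int) (t0 : 'I_f) : 'I_f -> int :=
  if [forall t, 0 < y0 p J c t] then y0 p J c else ysteps p J c t0 f.

Definition t0_ok (p f : nat) (J : {set 'I_f}) (c : 'I_f -> int) (t0 : 'I_f) :=
  (forall t, 0 < y0 p J c t) \/ y0 p J c t0 = 0.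

(* Main.v *)
Require Import Defs.
From HB Require Import structures.
From mathcomp Require Import all_boot all_order all_algebra all_solvable all_field.
From mathcomp Require Import zify ring lra.
Import Order.TTheory GRing.Theory Num.Theory.
Local Open Scope ring_scope.
Set Implicit Arguments. Unset Strict Implicit. Unset Printing Implicit Defensive.

Definition Om0 (p : nat) {f : nat} (m : 'I_f -> int) : int := \sum_(i < f) (p ^ i)%N%:Z * m i.

Lemma base_zero (p n : nat) (u : 'I_n -> int) : (2 <= p)%N ->
  (forall i, - (p%:Z - 1) <= u i <= p%:Z - 1) ->
  \sum_(i < n) (p ^ i)%N%:Z * u i = 0 -> forall i, u i = 0.
Proof.
move=> hp; elim: n u => [|n IH] u hu hs i; first by case: i.
move: hs; rewrite big_ord_recl /= expn0 mul1r.
have -> : \sum_(i < n) (p ^ (lift ord0 i))%N%:Z * u (lift ord0 i)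
   = p%:Z * \sum_(i < n) (p ^ i)%N%:Z * u (lift ord0 i).
  rewrite mulr_sumr; apply: eq_bigr => j _.
  by rewrite lift0 expnS PoszM mulrA.
move=> hs.
have hS : \sum_(i < n) (p ^ i)%N%:Z * u (lift ord0 i) = 0.
  move: (hu ord0) hs; set S := \sum_(i < n) _; nia.
have hu0 : u ord0 = 0 by move: hs; rewrite hS mulr0 addr0.
have IH' := IH (fun j => u (lift ord0 j)) (fun j => hu _) hS.
case: i => [[|j] Hj].
  by rewrite (_ : Ordinal Hj = ord0) //; apply: val_inj.
have Hj' : (j < n)%N by [].
by rewrite (_ : Ordinal Hj = lift ord0 (Ordinal Hj')) ?IH' //; apply: val_inj.
Qed.

Lemma geom (p f : nat) : \sum_(i < f) (p ^ i)%N%:Z * (p%:Z - 1) = (p ^ f)%N%:Z - 1.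
Proof.
elim: f => [|f IH]; first by rewrite big_ord0 expn0.
rewrite big_ord_recr /= IH expnS PoszM; ring.
Qed.

Lemma Npos (p f : nat) : (2 <= p)%N -> (0 < f)%N -> 0 < (p ^ f)%N%:Z - 1.
Proof.
move=> hp hf; have : (p ^ 0 < p ^ f)%N by rewrite ltn_exp2l.
rewrite expn0; lia.
Qed.

Lemma three_cases (p f : nat) (u : 'I_f -> int) : (2 <= p)%N -> (0 < f)%N ->
  (forall i, - (p%:Z - 1) <= u i <= p%:Z - 1) ->
  ((p ^ f)%N%:Z - 1 %| Om0 p u)%Z ->
  (forall i, u i = 0) \/ (forall i, u i = p%:Z - 1) \/ (forall i, u i = - (p%:Z - 1)).
Proof.
move=> hp hf hu /dvdzP [q hq].
have hN := Npos hp hf.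
have hub : Om0 p u <= (p ^ f)%N%:Z - 1.
  rewrite -geom /Om0; apply: ler_sum => i _; apply: ler_wpM2l => //.
  by case/andP: (hu i).
have hlb : - ((p ^ f)%N%:Z - 1) <= Om0 p u.
  rewrite -geom -sumrN /Om0; apply: ler_sum => i _; rewrite -mulrN.
  by apply: ler_wpM2l => //; case/andP: (hu i).
have : q = 0 \/ q = 1 \/ q = -1 by nia.
case=> [q0|[q1|qm1]].
- left; apply: (base_zero hp hu); by rewrite -/(Om0 p u) hq q0 mul0r.
- right; left => i.
  have h0 : \sum_(j < f) (p ^ j)%N%:Z * ((p%:Z - 1) - u j) = 0.
    rewrite (eq_bigr (fun j : 'I_f => (p ^ j)%N%:Z * (p%:Z - 1) - (p ^ j)%N%:Z * u j)).
      by rewrite sumrB geom -/(Om0 p u) hq q1 mul1r subrr.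
    by move=> j _; rewrite mulrBr.
  have hnn : forall j : 'I_f, true -> 0 <= (p ^ j)%N%:Z * ((p%:Z - 1) - u j).
    move=> j _; apply: mulr_ge0 => //; case/andP: (hu j) => _; lia.
  have h := psumr_eq0P hnn h0 (i := i) erefl.
  have hpi : 0 < (p ^ i)%N%:Z by rewrite ltz_nat expn_gt0; apply/orP; left; lia.
  move: (hu i); nia.
- right; right => i.
  have h0 : \sum_(j < f) (p ^ j)%N%:Z * ((p%:Z - 1) + u j) = 0.
    rewrite (eq_bigr (fun j : 'I_f => (p ^ j)%N%:Z * (p%:Z - 1) + (p ^ j)%N%:Z * u j)).
      by rewrite big_split /= geom -/(Om0 p u) hq qm1 mulN1r subrr.
    by move=> j _; rewrite mulrDr.
  have hpi : 0 < (p ^ i)%N%:Z by rewrite ltz_nat expn_gt0; apply/orP; left; lia.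
  have hnn : forall j : 'I_f, true -> 0 <= (p ^ j)%N%:Z * ((p%:Z - 1) + u j).
    move=> j _; apply: mulr_ge0 => //; case/andP: (hu j) => h1 _; lia.
  have h := psumr_eq0P hnn h0 (i := i) erefl.
  move: (hu i); nia.
Qed.

Definition eps (f : nat) (J : {set 'I_f}) (t : 'I_f) : int := if t \in J then 1 else -1.
Definition NN (p f : nat) : int := (p ^ f)%N%:Z - 1.
Definition Cp (p f : nat) (J : {set 'I_f}) (c Y : 'I_f -> int) :=
  (NN p f %| Om0 p (fun t => eps J t * Y t - c t))%Z.

Lemma Om0_ext p f (m1 m2 : 'I_f -> int) : (forall i, m1 i = m2 i) -> Om0 p m1 = Om0 p m2.
Proof. by move=> h; apply: eq_bigr => i _; rewrite h. Qed.

Lemma Om0D p f (m1 m2 : 'I_f -> int) : Om0 p (fun i => m1 i + m2 i) = Om0 p m1 + Om0 p m2.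
Proof. by rewrite /Om0 -big_split; apply: eq_bigr => i _; rewrite mulrDr. Qed.

Lemma Om0B p f (m1 m2 : 'I_f -> int) : Om0 p (fun i => m1 i - m2 i) = Om0 p m1 - Om0 p m2.
Proof. by rewrite /Om0 -sumrB; apply: eq_bigr => i _; rewrite mulrBr. Qed.

Lemma Om0Z p f (a : int) (m : 'I_f -> int) : Om0 p (fun i => a * m i) = a * Om0 p m.
Proof. by rewrite /Om0 mulr_sumr; apply: eq_bigr => i _; rewrite mulrCA. Qed.

Lemma Om0_shift p f (m : 'I_f -> int) :
  (NN p f %| Om0 p (fun i => m (ord_pred i)) - p%:Z * Om0 p m)%Z.
Proof.
rewrite /Om0 (reindex_inj (@ordS_inj f)) /= mulr_sumr -sumrB.
apply: rpred_sum => j _; rewrite ordSK mulrA -mulrBl; apply: dvdz_mulr.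
rewrite /NN /=; have hj := ltn_ord j.
case: (ltngtP j.+1 f) => hjf.
- by rewrite modn_small // expnS PoszM subrr dvdz0.
- lia.
- rewrite hjf modnn expn0 -PoszM -expnS hjf.
  by apply/dvdzP; exists (-1); rewrite mulN1r opprB.
Qed.

Lemma phi_val f (j : nat) (t : 'I_f) : val (phi_shift j t) = ((t + j) %% f)%N.
Proof.
elim: j => [|j IH]; first by rewrite addn0 modn_small.
rewrite /phi_shift iterS /= -/(phi_shift j t) IH.
by rewrite -[(((t + j) %% f).+1)%N]addn1 modnDml addn1 addnS.
Qed.

Lemma phi_inj f (t : 'I_f) i j : (i < f)%N -> (j < f)%N -> phi_shift i t = phi_shift j t -> i = j.
Proof.
move=> hi hj /(congr1 val); rewrite !phi_val => /eqP.
by rewrite eqn_modDl !modn_small // => /eqP.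
Qed.

Lemma phi_surj f (t0 t : 'I_f) : exists2 j, (j < f)%N & phi_shift j t0 = t.
Proof.
exists ((t + f - t0) %% f)%N; first by rewrite ltn_mod; case: f t0 {t} => [[]|].
apply: val_inj; rewrite phi_val /= modnDmr.
have -> : (t0 + (t + f - t0) = t + f)%N by have := ltn_ord t0; lia.
by rewrite modnDr modn_small.
Qed.

Lemma phi_f f (t : 'I_f) : phi_shift f t = t.
Proof. by apply: val_inj; rewrite phi_val modnDr modn_small. Qed.

Lemma phiS f j (t : 'I_f) : phi_shift j.+1 t = ordS (phi_shift j t).
Proof. by []. Qed.

Lemma pred_phi f (t : 'I_f) : (0 < f)%N -> ord_pred t = phi_shift f.-1 t.
Proof.
move=> hf; apply: (@ordS_inj f); rewrite ord_predK -phiS prednK //.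
by rewrite phi_f.
Qed.

Lemma pred_eq f (u t : 'I_f) : (ord_pred u == t) = (u == ordS t).
Proof. by apply/eqP/eqP => [<-|->]; rewrite ?ord_predK ?ordSK. Qed.

Lemma y0_C p f (J : {set 'I_f}) c : Cp p J c (y0 p J c).
Proof.
pose m := fun u : 'I_f => if u \in J then 0 else 1 : int.
have key : forall t, eps J t * y0 p J c t - c t = m (ord_pred t) - p%:Z * m t.
  move=> t; rewrite /eps /y0 /m.
  case: (t \in J); case: (ord_pred t \in J); ring.
rewrite /Cp (Om0_ext _ key) Om0B Om0Z; exact: Om0_shift.
Qed.

Lemma deltaJ_C p f (J : {set 'I_f}) c Y t : Cp p J c Y ->
  (Y t <= 0 -> t \notin J) -> (p%:Z < Y t -> t \in J) -> Cp p J c (deltaJ p J Y t).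
Proof.
move=> hC h1 h2.
pose m := fun u : 'I_f => if u == t then 1 else 0 : int.
have key : forall u, eps J u * deltaJ p J Y t u - c u =
   (eps J u * Y u - c u) +
   (if (1 <= Y t) && (Y t <= p%:Z) then 0 else (m (ord_pred u) - p%:Z * m u)).
  move=> u; rewrite /deltaJ /m pred_eq; case: ifP => hr; first by rewrite addr0.
  case: (eqVneq u t) => [->|hut].
    case: (eqVneq t (ordS t)) => [he|hne].
      rewrite -?he /eps; case: (lerP (Y t) 0) => hy.
        by rewrite (negbTE (h1 hy)); ring.
      have hy2 : p%:Z < Y t by move: hr hy; case: (lerP (Y t) p%:Z) => //= ?; rewrite andbT; lia.
      by rewrite (h2 hy2); ring.
    rewrite /eps; case: (lerP (Y t) 0) => hy.
      by rewrite (negbTE (h1 hy)); ring.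
    have hy2 : p%:Z < Y t by move: hr hy; case: (lerP (Y t) p%:Z) => //= ?; rewrite andbT; lia.
    by rewrite (h2 hy2); ring.
  case: (eqVneq u (ordS t)) => [->|hu].
    by rewrite /eps; case: (ordS t \in J); ring.
  ring.
rewrite /Cp (Om0_ext _ key) Om0D; apply: rpredD => //.
case: ((1 <= Y t) && (Y t <= p%:Z)); first by rewrite /Om0 big1 ?dvdz0 // => i _; rewrite mulr0.
by rewrite Om0B Om0Z; exact: Om0_shift.
Qed.

Definition rng (p : nat) (v : int) := (1 <= v) && (v <= p%:Z).
Definition pb (p f : nat) (J : {set 'I_f}) (t : 'I_f) (v : int) :=
  if t \in J then (1 <= v) && (v <= p%:Z + 1) else (-1 <= v) && (v <= p%:Z - 1).

Lemma deltaJ_other p f (J : {set 'I_f}) Y t u : u != t -> u != ordS t ->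
  deltaJ p J Y t u = Y u.
Proof.
move=> h1 h2; rewrite /deltaJ (negbTE h1) (negbTE h2); case: ifP => // _; ring.
Qed.

Lemma deltaJ_at p f (J : {set 'I_f}) Y t : ordS t != t ->
  deltaJ p J Y t t = if rng p (Y t) then Y t else Y t + (if Y t <= 0 then p%:Z else - p%:Z).
Proof.
move=> h; rewrite /deltaJ /rng eqxx eq_sym (negbTE h); case: ifP => // _; ring.
Qed.

Lemma deltaJ_next p f (J : {set 'I_f}) Y t : ordS t != t ->
  deltaJ p J Y t (ordS t) = if rng p (Y t) then Y (ordS t) else Y (ordS t) + eps J (ordS t).
Proof.
move=> h; rewrite /deltaJ /rng eqxx (negbTE h); case: ifP => // _; rewrite /eps; ring.
Qed.

Lemma y0_bounds p f (J : {set 'I_f}) c t : (forall t, 1 <= c t <= p%:Z - 1) ->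
  if t \in J then 1 <= y0 p J c t <= p%:Z else 0 <= y0 p J c t <= p%:Z - 1.
Proof.
move=> hc; have := hc t; rewrite /y0; case: (t \in J); case: (ord_pred t \in J) => /andP[h1 h2];
  apply/andP; split; lia.
Qed.

Lemma y0_zero p f (J : {set 'I_f}) c t : (forall t, 1 <= c t <= p%:Z - 1) ->
  y0 p J c t = 0 -> t \notin J /\ ord_pred t \notin J /\ c t = p%:Z - 1.
Proof.
move=> hc; have := hc t; rewrite /y0; case: (t \in J); case: (ord_pred t \in J) => /andP[h1 h2] h;
  do ?split => //; lia.
Qed.

Definition INV (p f : nat) (J : {set 'I_f}) (c : 'I_f -> int) (t0 : 'I_f) (k : nat) :=
  let Y := ysteps p J c t0 k in
  Cp p J c Y /\
  (forall j, (0 < j)%N -> (j < f)%N -> (k < j)%N -> Y (phi_shift j t0) = y0 p J c (phi_shift j t0)) /\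
  (forall j, (0 < j)%N -> (j < k)%N -> (j < f)%N -> rng p (Y (phi_shift j t0))) /\
  ((k < f)%N -> pb p J (phi_shift k t0) (Y (phi_shift k t0)) /\ Y t0 = p%:Z) /\
  (k = f -> rng p (Y t0) /\ p%:Z - 1 <= Y t0 /\ (Y (ord_pred t0) = p%:Z -> Y t0 = p%:Z - 1)).

Lemma phi_neq f (t0 : 'I_f) i j : (i < f)%N -> (j < f)%N -> i <> j ->
  phi_shift i t0 != phi_shift j t0.
Proof. by move=> hi hj hij; apply/eqP => /(phi_inj hi hj). Qed.

Lemma INV1 p f (J : {set 'I_f}) c t0 : (2 <= p)%N -> (0 < f)%N ->
  (forall t, 1 <= c t <= p%:Z - 1) -> y0 p J c t0 = 0 -> INV p J c t0 1.
Proof.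
move=> hp hf hc h0; have [nJ [npJ ct0]] := y0_zero hc h0.
rewrite /INV /=.
have hC : Cp p J c (deltaJ p J (y0 p J c) t0).
  apply: deltaJ_C; [exact: y0_C | by [] | by rewrite h0; lia].
have hr0 : rng p (y0 p J c t0) = false by rewrite h0.
case: (ltngtP 1 f) => hf1; last first.
-
  subst f.
  have I1 : forall u v : 'I_1, u = v by move=> [[|?] ?] [[|?] ?] //; apply: val_inj.
  have eS : ordS t0 = t0 by apply: I1.
  have eP : ord_pred t0 = t0 by apply: I1.
  have v0 : deltaJ p J (y0 p J c) t0 t0 = p%:Z - 1.
    rewrite /deltaJ {1 3}h0 /= eqxx -{3}eS eqxx eS (negbTE nJ) h0; ring.
  split => //; split; first by move=> j hj1 hj2; lia.
  split; first by move=> j hj1 hj2; lia.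
  split; first by lia.
  move=> _; rewrite eP v0 /rng; split; first by apply/andP; split; lia.
  split; lia.
- lia.
- have n10 : phi_shift 1 t0 != t0 by apply: (@phi_neq _ t0 1 0) => //.
  have eS : ordS t0 = phi_shift 1 t0 by [].
  split => //; split.
    move=> j hj1 hj2 hj3; rewrite deltaJ_other //.
      by apply: (@phi_neq _ t0 j 0) => //; lia.
    by rewrite eS; apply: phi_neq => //; lia.
  split; first by move=> j hj1 hj2; lia.
  split; last by lia.
  move=> _; split.
    rewrite deltaJ_next; last by rewrite eS.
    rewrite hr0; have := y0_bounds J (ordS t0) hc; rewrite /pb /eps.
    case: (_ \in J) => /andP[h1 h2]; apply/andP; split; lia.
  rewrite deltaJ_at; last by rewrite eS.
  rewrite hr0 h0 /=; ring.
Qed.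

Lemma pb_fix p f (J : {set 'I_f}) t v : (2 <= p)%N -> pb p J t v ->
  rng p (if rng p v then v else v + (if v <= 0 then p%:Z else - p%:Z)).
Proof.
move=> hp; rewrite /pb /rng; case: (t \in J) => /andP[h1 h2];
  case: ifP => // /negbT; rewrite negb_and -!ltNge => /orP[h3|h3];
  case: ifP => h4; apply/andP; split; lia.
Qed.

Lemma INVS p f (J : {set 'I_f}) c t0 k : (2 <= p)%N -> (0 < f)%N ->
  (forall t, 1 <= c t <= p%:Z - 1) -> y0 p J c t0 = 0 ->
  (0 < k)%N -> (k < f)%N -> INV p J c t0 k -> INV p J c t0 k.+1.
Proof.
move=> hp hf hc h0 hk0 hkf; have [nJ [npJ ct0]] := y0_zero hc h0.
rewrite /INV /= -/(ysteps p J c t0 k).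
set Y := ysteps p J c t0 k.
move=> [hC [hU [hP [hN hF]]]].
have [hpb hY0] := hN hkf.
set t := phi_shift k t0. clearbody Y. clear hN hF.
have eSt : ordS t = phi_shift k.+1 t0 by [].
have hr : forall v, (v <= 0 -> t \notin J) /\ (p%:Z < v -> t \in J) \/ ~ pb p J t v.
  move=> v; case hv: (pb p J t v); last by right.
  left; move: hv; rewrite /pb; case: (t \in J) => /andP[h1 h2]; split => // h; lia.
have hC' : Cp p J c (deltaJ p J Y t).
  case: (hr (Y t)) => [[h1 h2]|//]; exact: deltaJ_C.
have tne0 : t != t0 by apply: (@phi_neq _ t0 k 0) => //; lia.
have [hk1|hk1] := ltnP k.+1 f.
-
  have hne : ordS t != t by rewrite eSt; apply: phi_neq => //; lia.
  have t0ne : t0 != ordS t by rewrite eSt eq_sym; apply: (@phi_neq _ t0 k.+1 0) => //; lia.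
  split => //; split.
    move=> j hj1 hj2 hj3; rewrite deltaJ_other; first by apply: hU => //; lia.
      by apply: phi_neq => //; lia.
    by rewrite eSt; apply: phi_neq => //; lia.
  split.
    move=> j hj1 hj2 hj3; case: (eqVneq j k) => [->|hjk].
      rewrite deltaJ_at //; exact: pb_fix hpb.
    rewrite deltaJ_other; first by apply: hP => //; lia.
      by apply: phi_neq => //; lia.
    by rewrite eSt; apply: phi_neq => //; lia.
  split; last by lia.
  move=> _; split.
    rewrite deltaJ_next // eSt (hU k.+1 (ltn0Sn k) hk1 (ltnSn k)).
    have := y0_bounds J (phi_shift k.+1 t0) hc; rewrite /pb /eps.
    case: (_ \in J) => /andP[h1 h2]; case: ifP => _; apply/andP; split; lia.
  by rewrite deltaJ_other // eq_sym.
-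
  have hk1' : k.+1 = f by lia. clear hk1; rename hk1' into hk1.
  have eS0 : ordS t = t0 by rewrite eSt hk1 phi_f.
  have hne : ordS t != t by rewrite eS0 eq_sym.
  have ePt : ord_pred t0 = t by rewrite -eS0 ordSK.
  split => //; split; first by move=> j; lia.
  split.
    move=> j hj1 hj2 hj3; case: (eqVneq j k) => [->|hjk].
      rewrite deltaJ_at //; exact: pb_fix hpb.
    have hjk' : (j < k)%N by lia.
    rewrite deltaJ_other; first exact: hP.
      by apply: phi_neq => //; lia.
    by rewrite eS0; apply: (@phi_neq _ t0 j 0) => //; lia.
  split; first by lia.
  move=> _; rewrite ePt -!eS0 deltaJ_next // deltaJ_at // eS0 hY0 /eps (negbTE nJ).
  split; first by case: ifP => _; rewrite /rng; apply/andP; split; lia.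
  split; first by case: ifP => _; lia.
  case: ifP => // hrv heq.
  have npJ' : t \notin J by rewrite -ePt.
  move: hpb heq; rewrite /pb -/t (negbTE npJ') => /andP[_ h2] h3; lia.
Qed.

Lemma greedy p f (J : {set 'I_f}) c t0 : (2 <= p)%N -> (0 < f)%N ->
  (forall t, 1 <= c t <= p%:Z - 1) -> y0 p J c t0 = 0 ->
  (forall t, rng p (ysteps p J c t0 f t)) /\ Cp p J c (ysteps p J c t0 f) /\
  p%:Z - 1 <= ysteps p J c t0 f t0 /\
  (ysteps p J c t0 f (ord_pred t0) = p%:Z -> ysteps p J c t0 f t0 = p%:Z - 1).
Proof.
move=> hp hf hc h0.
have hI : forall k, (0 < k)%N -> (k <= f)%N -> INV p J c t0 k.
  elim=> [//|k IH] _ hk.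
  case: (posnP k) => [->|hk0]; first exact: INV1.
  apply: INVS => //; apply: IH => //; exact: ltnW.
have [hC [_ [hP [_ hF]]]] := hI f hf (leqnn f).
have [hr0 [hge hG3]] := hF erefl.
split; last by [].
move=> t; have [j hj <-] := phi_surj t0 t.
case: (posnP j) => [->|hj0]; first exact: hr0.
exact: hP.
Qed.

Lemma Wz_eq1 (L : fieldType) (w : L) (zz : int) (N : nat) :
  w ^+ N = 1 -> (N%:Z %| zz)%Z -> w ^ zz = 1.
Proof.
move=> hN /dvdzP [q ->]; rewrite mulrC -exprz_exp.
by rewrite (_ : w ^ N%:Z = w ^+ N) // hN exp1rz.
Qed.

Lemma W_ord (L : fieldType) (w : L) (N : nat) :
  (forall m, w ^+ m = 1 -> (N %| m)%N) -> forall zz, w ^ zz = 1 -> (N%:Z %| zz)%Z.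
Proof.
move=> hw [n|n] /= h; rewrite dvdzE /=; apply: hw => //.
by apply/eqP; rewrite -invr_eq1; apply/eqP.
Qed.

Lemma gen_exists (k : finFieldType) :
  exists2 z : k, z != 0 & forall m, z ^+ m = 1 -> (#|k|.-1 %| m)%N.
Proof.
set n := #|k|.-1.
have hpos : (0 < n)%N.
  rewrite /n -(cardC1 (0 : k)); apply/card_gt0P; exists 1; rewrite !inE; exact: oner_neq0.
have hx : forall x : k, x != 0 -> x ^+ n = 1.
  have hk : #|k| = n.+1 by rewrite /n prednK //; apply/card_gt0P; exists 0.
  move=> x hx; have := expf_card x; rewrite hk exprS => h.
  by apply: (mulfI hx); rewrite h mulr1.
have hall : all n.-unity_root (enum (predC1 (0 : k))).
  by apply/allP => x; rewrite mem_enum !inE => h; rewrite unity_rootE hx.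
have hsz : (n <= size (enum (predC1 (0%R : k))))%N by rewrite -cardE cardC1.
have /hasP[z] := @has_prim_root k n (enum (predC1 0)) hpos hall (enum_uniq _) hsz.
rewrite mem_enum !inE => hz hprim; exists z => // m hm.
by rewrite (prim_order_dvd hprim) hm.
Qed.

Lemma omprodE (k L : fieldType) (tau0 : {rmorphism k -> L}) (p f : nat) (G : Type)
  (om : G -> k) (A : {set 'I_f}) (m : 'I_f -> int) (g : G) :
  om g != 0 -> omprod tau0 p om A m g = (tau0 (om g)) ^ (\sum_(i in A) (p ^ i)%N%:Z * m i).
Proof.
move=> hg; set w := tau0 (om g).
have hw : w \is a GRing.unit by rewrite unitfE fmorph_eq0.
rewrite (big_morph (fun z => w ^ z) (exprzDr hw) (expr0z w)).
rewrite /omprod; apply: eq_bigr => i _; rewrite /omega_tau rmorphXn.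
by rewrite -exprz_exp.
Qed.

Definition E1 f (a b : 'I_f -> int) (J : {set 'I_f}) (x : 'I_f -> int) :=
  fun i => if i \in J then a i + 1 + x i else b i + x i.
Definition E2 f (e : nat) (a b : 'I_f -> int) (J : {set 'I_f}) (x : 'I_f -> int) :=
  fun i => if i \in J then b i + e%:Z - 1 - x i else a i + e%:Z - x i.

Lemma sum_split f (J : {set 'I_f}) (F G : 'I_f -> int) :
  \sum_(i in J) F i + \sum_(i in ~: J) G i = \sum_i (if i \in J then F i else G i).
Proof.
rewrite [RHS](bigID (fun i => i \in J)) /=; congr (_ + _).
  by apply: eq_big => // i hi; rewrite hi.
apply: eq_big => [i|i]; first by rewrite inE.
by rewrite inE => /negbTE ->.
Qed.

Lemma ch1E (k L : fieldType) (tau0 : {rmorphism k -> L}) (p f : nat) (G : Type)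
  (om : G -> k) (a b : 'I_f -> int) (J : {set 'I_f}) (x : 'I_f -> int) (g : G) :
  om g != 0 -> ch1 tau0 p om a b J x g = (tau0 (om g)) ^ (Om0 p (E1 a b J x)).
Proof.
move=> hg; have hw : tau0 (om g) \is a GRing.unit by rewrite unitfE fmorph_eq0.
rewrite /ch1 !omprodE // -exprzDr //; congr (_ ^ _).
rewrite sum_split /Om0; apply: eq_bigr => i _; rewrite /E1; by case: (i \in J).
Qed.

Lemma ch2E (k L : fieldType) (tau0 : {rmorphism k -> L}) (p f e : nat) (G : Type)
  (om : G -> k) (a b : 'I_f -> int) (J : {set 'I_f}) (x : 'I_f -> int) (g : G) :
  om g != 0 -> ch2 tau0 p e om a b J x g = (tau0 (om g)) ^ (Om0 p (E2 e a b J x)).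
Proof.
move=> hg; have hw : tau0 (om g) \is a GRing.unit by rewrite unitfE fmorph_eq0.
rewrite /ch2 !omprodE // mulrC -exprzDr //; congr (_ ^ _).
rewrite sum_split /Om0; apply: eq_bigr => i _; rewrite /E2; by case: (i \in J).
Qed.

Lemma Omega_ext p f (m1 m2 : 'I_f -> int) t : (forall i, m1 i = m2 i) -> Omega p m1 t = Omega p m2 t.
Proof. by move=> h; apply: eq_bigr => i _; rewrite h. Qed.

Lemma Omega_lin p f (q : int) (m1 m2 : 'I_f -> int) t :
  Omega p (fun v => q * m1 v - m2 v) t = q * Omega p m1 t - Omega p m2 t.
Proof.
rewrite /Omega mulr_sumr -sumrB; apply: eq_bigr => i _; ring.
Qed.

Lemma Omega_e p f (u t : 'I_f) r : (r < f)%N -> phi_shift r u = t ->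
  Omega p (fun v => if v == t then 1 else 0) u = (p ^ r)%N%:Z.
Proof.
move=> hr hrt; rewrite /Omega (bigD1 (Ordinal hr)) //= hrt eqxx mulr1 big1 ?addr0 //.
move=> i hi; case: eqP => [hit|]; last by rewrite mulr0.
exfalso; move: hi; rewrite -hrt in hit; have := phi_inj (ltn_ord i) hr hit.
by move=> hv; apply/negP; rewrite negbK; apply/eqP; apply: val_inj.
Qed.

Lemma Omega_flip p f (u t : 'I_f) : (0 < f)%N -> ordS t != t ->
  Omega p (fun v => if v == t then p%:Z else if v == ordS t then -1 else 0) u = 0 \/
  Omega p (fun v => if v == t then p%:Z else if v == ordS t then -1 else 0) u = NN p f.
Proof.
move=> hf hne.
rewrite (Omega_ext _ (m2 := fun v => p%:Z * (if v == t then 1 else 0) - (if v == ordS t then 1 else 0))); last first.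
  have hne' : (t == ordS t) = false by rewrite eq_sym (negbTE hne).
  move=> v; case: (eqVneq v t) => [->|hvt]; first by rewrite ?eqxx hne'; ring.
  by case: (v == ordS t); ring.
rewrite Omega_lin.
have [r hr hrt] := phi_surj u t.
rewrite (Omega_e p hr hrt).
case: (ltnP r.+1 f) => hr1.
  left; rewrite (@Omega_e p _ u (ordS t) r.+1) //; last by rewrite phiS hrt.
  by rewrite expnS PoszM subrr.
right; have hrf : r.+1 = f by lia.
rewrite (@Omega_e p _ u (ordS t) 0) //; last by rewrite -hrt -phiS hrf phi_f.
by rewrite /NN -hrf expnS PoszM expn0.
Qed.

Lemma om_pow (k : finFieldType) (z : k) : z != 0 -> z ^+ #|k|.-1 = 1.
Proof.
move=> hz; have hk : #|k| = (#|k|.-1).+1 by rewrite prednK //; apply/card_gt0P; exists 0.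
have := expf_card z; rewrite {1}hk exprS => h.
by apply: (mulfI hz); rewrite h mulr1.
Qed.

Lemma NN_card (k : finFieldType) p f : #|k| = (p ^ f)%N -> NN p f = (#|k|.-1)%:Z.
Proof.
move=> hk; have : (0 < #|k|)%N by apply/card_gt0P; exists 0.
rewrite /NN hk; lia.
Qed.

Lemma E12 f e (a b : 'I_f -> int) J x i : E1 a b J x i + E2 e a b J x i = a i + b i + e%:Z.
Proof. by rewrite /E1 /E2; case: (i \in J); ring. Qed.

Lemma sJxE f (a b : 'I_f -> int) J x i : sJx a b J x i = E1 a b J x i - b i.
Proof. by rewrite /sJx /E1; case: (i \in J); ring. Qed.

Lemma bigger (k : finFieldType) (L : fieldType) (tau0 : {rmorphism k -> L}) (p f e : nat)
  (G : Type) (I : G -> Prop) (om : G -> k) (chi1 chi2 : G -> L) (a b : 'I_f -> int)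
  (J : {set 'I_f}) (x : 'I_f -> int) (J' : {set 'I_f}) :
  #|k| = (p ^ f)%N -> (forall g, om g != 0) ->
  maxS (in_S tau0 p e I om chi1 chi2 a b) (leS p a b) J x ->
  (NN p f %| Om0 p (fun i => E1 a b J' x i - E1 a b J x i))%Z ->
  (forall t, 0 <= Omega p (fun u => E1 a b J' x u - E1 a b J x u) t /\
     (NN p f %| Omega p (fun u => E1 a b J' x u - E1 a b J x u) t)%Z) ->
  J' = J.
Proof.
move=> hk hom [[hx [h1 h2]] hmax] hd hO.
have hNN := NN_card hk.
have hW : forall g, (tau0 (om g)) ^+ #|k|.-1 = 1.
  by move=> g; rewrite -rmorphXn om_pow // rmorph1.
have hu : forall g, tau0 (om g) \is a GRing.unit by move=> g; rewrite unitfE fmorph_eq0.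
have hin : in_S tau0 p e I om chi1 chi2 a b J' x.
  split => //; split.
  + move=> g hg; rewrite h1 // !ch1E //.
    have -> : Om0 p (E1 a b J' x) = Om0 p (E1 a b J x) + Om0 p (fun i => E1 a b J' x i - E1 a b J x i).
      by rewrite Om0B; ring.
    have hd1 : tau0 (om g) ^ (Om0 p (fun i => E1 a b J' x i - E1 a b J x i)) = 1.
      by apply: (Wz_eq1 (hW g)); rewrite -hNN.
    by rewrite exprzDr // hd1 mulr1.
  + move=> g hg; rewrite h2 // !ch2E //.
    have -> : Om0 p (E2 e a b J' x) = Om0 p (E2 e a b J x) - Om0 p (fun i => E1 a b J' x i - E1 a b J x i).
      rewrite Om0B -Om0B -Om0B; apply: Om0_ext => i.
      have := E12 e a b J x i; have := E12 e a b J' x i; lia.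
    have hd1 : tau0 (om g) ^ (- Om0 p (fun i => E1 a b J' x i - E1 a b J x i)) = 1.
      by apply: (Wz_eq1 (hW g)); rewrite -hNN rpredN.
    by rewrite exprzDr // hd1 mulr1.
have hle : leS p a b J x J' x.
  move=> t; rewrite (Omega_ext _ (m2 := fun u => E1 a b J' x u - E1 a b J x u)).
    have hNN2 : ((p ^ f - 1)%N%:Z) = NN p f.
      have : (0 < #|k|)%N by apply/card_gt0P; exists 0.
      rewrite /NN hk; lia.
    rewrite hNN2; exact: hO.
  by move=> i; rewrite !sJxE; ring.
by have [] := hmax J' x hin hle.
Qed.

Lemma boundary f (J : {set 'I_f}) : J != set0 -> J != setT ->
  exists t, t \notin J /\ ordS t \in J.
Proof.
move=> h0 hT.
case: (boolP [exists t, (t \notin J) && (ordS t \in J)]).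
  by case/existsP => t /andP[h1 h2]; exists t.
rewrite negb_exists => /forallP hall.
have [w hw] : exists w, w \notin J.
  case: (boolP [exists w, w \notin J]); first by case/existsP => w hw; exists w.
  rewrite negb_exists => /forallP hw; case/negP: hT; apply/eqP/setP => v.
  by rewrite inE; have := hw v; rewrite negbK.
have hit : forall j, phi_shift j w \notin J.
  elim=> [//|j IH]; rewrite phiS; have := hall (phi_shift j w).
  by rewrite negb_and IH /= => ->.
case/set0Pn: h0 => u hu.
have [j _ hj] := phi_surj w u.
by move: (hit j); rewrite hj hu.
Qed.

Lemma rJc_cases p f (J : {set 'I_f}) c t0 : t0_ok p J c t0 ->
  ((forall t, 0 < y0 p J c t) /\ (forall t, rJc p J c t0 t = y0 p J c t)) \/
  (y0 p J c t0 = 0 /\ (forall t, rJc p J c t0 t = ysteps p J c t0 f t)).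
Proof.
rewrite /rJc; case: (boolP [forall t, 0 < y0 p J c t]) => [/forallP h|hn] ho.
  by left; split.
right; split => //; case: ho => // hpos; case/negP: hn; apply/forallP => t; exact: hpos.
Qed.

Lemma indep p f (J : {set 'I_f}) c t0 t0' : (2 <= p)%N -> (0 < f)%N ->
  (forall t, 1 <= c t <= p%:Z - 1) -> y0 p J c t0 = 0 -> y0 p J c t0' = 0 ->
  forall t, rJc p J c t0 t = rJc p J c t0' t.
Proof.
move=> hp hf hc h0 h0'.
have [[hpos _]|[_ e1]] := rJc_cases (or_intror h0); first by have := hpos t0; rewrite h0.
have [[hpos _]|[_ e2]] := rJc_cases (or_intror h0'); first by have := hpos t0; rewrite h0.
move=> t; rewrite e1 e2; move: t.
have [r1 [C1 [_ G1]]] := greedy hp hf hc h0.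
have [r2 [C2 [_ G2]]] := greedy hp hf hc h0'.
set R := ysteps p J c t0 f in r1 C1 G1 *; set R' := ysteps p J c t0' f in r2 C2 G2 *.
have [nJ [npJ _]] := y0_zero hc h0.
have [nJ' [npJ' _]] := y0_zero hc h0'.
have hd : (NN p f %| Om0 p (fun t => eps J t * (R t - R' t)))%Z.
  rewrite (Om0_ext _ (m2 := fun t => (eps J t * R t - c t) - (eps J t * R' t - c t))); last by move=> i; ring.
  rewrite Om0B; exact: rpredB.
have hb : forall t, - (p%:Z - 1) <= eps J t * (R t - R' t) <= p%:Z - 1.
  move=> t; move: (r1 t) (r2 t); rewrite /rng /eps => /andP[a1 a2] /andP[b1 b2].
  by case: (t \in J); apply/andP; split; lia.
case: (three_cases hp hf hb hd) => [h|[h|h]].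
- move=> t; have := h t; rewrite /eps; case: (t \in J) => ?; lia.
- exfalso; have := h t0'; have := h (ord_pred t0'); rewrite /eps (negbTE nJ') (negbTE npJ').
  move: (r1 t0') (r2 t0') (r1 (ord_pred t0')) (r2 (ord_pred t0')); rewrite /rng.
  move=> /andP[? ?] /andP[? ?] /andP[? ?] /andP[? ?] ha hb'.
  have e3 : R' (ord_pred t0') = p%:Z by lia.
  have := G2 e3; lia.
- exfalso; have := h t0; have := h (ord_pred t0); rewrite /eps (negbTE nJ) (negbTE npJ).
  move: (r1 t0) (r2 t0) (r1 (ord_pred t0)) (r2 (ord_pred t0)); rewrite /rng.
  move=> /andP[? ?] /andP[? ?] /andP[? ?] /andP[? ?] ha hb'.
  have e3 : R (ord_pred t0) = p%:Z by lia.
  have := G1 e3; lia.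
Qed.

Lemma notT_ex f (J : {set 'I_f}) : J != setT -> exists t, t \notin J.
Proof.
move=> hT; case: (boolP [exists w, w \notin J]); first by case/existsP => w hw; exists w.
rewrite negb_exists => /forallP hw; case/negP: hT; apply/eqP/setP => v.
by rewrite inE; have := hw v; rewrite negbK.
Qed.

Lemma Om0_Omega p f (m : 'I_f -> int) (t00 : 'I_f) : val t00 = 0%N -> Om0 p m = Omega p m t00.
Proof.
move=> h; apply: eq_bigr => i _; congr (_ * m _); apply: val_inj.
by rewrite phi_val h add0n modn_small.
Qed.

Lemma omprodT (k L : fieldType) (tau0 : {rmorphism k -> L}) (p f : nat) (G : Type)
  (om : G -> k) (m : 'I_f -> int) (g : G) :
  om g != 0 -> omprod tau0 p om setT m g = (tau0 (om g)) ^ (Om0 p m).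
Proof.
move=> hg; rewrite omprodE //; congr (_ ^ _); apply: eq_bigl => i; by rewrite inE.
Qed.

Lemma Om0_const2 f : Om0 2 (fun _ : 'I_f => 2) = 2 * NN 2 f.
Proof. by rewrite /NN -geom /Om0 mulr_sumr; apply: eq_bigr => i _; lia. Qed.

Lemma Omega_const2 f (t : 'I_f) : Omega 2 (fun _ : 'I_f => 2) t = 2 * NN 2 f.
Proof. by rewrite /NN -geom /Omega mulr_sumr; apply: eq_bigr => i _; lia. Qed.

Unset Implicit Arguments.

Theorem proposition5p7
  (p f e : nat) (k : finFieldType) (L : fieldType) (tau0 : {rmorphism k -> L})
  (G : Type) (mulG : G -> G -> G) (I : G -> Prop) (om : G -> k)
  (chi1 chi2 psi : G -> L) (n a b : 'I_f -> int)
  (J : {set 'I_f}) (x : 'I_f -> int) :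
  prime p -> (0 < f)%N -> (0 < e)%N -> #|k| = (p ^ f)%N ->
  (forall g, om g != 0) -> (forall g h, om (mulG g h) = om g * om h) ->
  (forall u : k, u != 0 -> exists2 g, I g & om g = u) ->
  is_char mulG chi1 -> is_char mulG chi2 -> is_char mulG psi ->
  (forall g, I g -> psi g = 1) ->
  (forall t, 1 <= n t <= p%:Z) -> (exists t, n t < p%:Z) ->
  (forall g, chi1 g / chi2 g = psi g * omprod tau0 p om setT n g) ->
  (forall t, e%:Z <= n t <= p%:Z - e%:Z) ->
  (forall t, 0 <= a t - b t <= p%:Z - 1) ->
  in_Wexp tau0 p e I om chi1 chi2 a b ->
  unique_maxS (in_S tau0 p e I om chi1 chi2 a b) (leS p a b) J x ->
  let c := fun t => n t + e%:Z - 1 - 2 * x t in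
  (forall t, 1 <= c t <= p%:Z - 1) /\
  (forall t0 t0', y0 p J c t0 = 0 -> y0 p J c t0' = 0 ->
     forall t, rJc p J c t0 t = rJc p J c t0' t) /\
  (forall t0, t0_ok p J c t0 ->
     let r := rJc p J c t0 in
     let exc := (J = setT /\ forall t, n t = e%:Z /\ x t = e%:Z - 1) \/
                (J = set0 /\ forall t, n t = p%:Z - 1 - e%:Z /\ x t = 0) in
     (exc -> (forall t, a t - b t + 1 = r t) \/ (forall t, a t - b t + 1 = p%:Z)) /\
     (~ exc -> forall t, a t - b t + 1 = r t)).
Proof.
move=> hpr hf he hk hom0 homM hsurj hc1 hc2 hpsi hpsiI hn hnlt hchi hwg hab hW hU c.
have hp : (2 <= p)%N := prime_gt1 hpr.
pose t1 : 'I_f := Ordinal hf.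
have [hmax _] := hU.
have [[hx [h1 h2]] hmax2] := hmax.
have hcb : forall t, 1 <= c t <= p%:Z - 1.
  move=> t; have := hwg t; have := hx t; rewrite /c => /andP[? ?] /andP[? ?].
  apply/andP; split; lia.
split; first exact: hcb.
split; first by move=> t0 t0' h0 h0'; exact: indep.
move=> t0 hok r exc.
pose D := fun t => a t - b t + 1.
have hNN := NN_card hk.
have CD : Cp p J c D.
  have [z hz hzord] := gen_exists k.
  have [g0 hg0 hom] := hsurj z hz.
  set w := tau0 (om g0).
  have hw0 : w != 0 by rewrite /w fmorph_eq0.
  have hwu : w \is a GRing.unit by rewrite unitfE.
  have e1 := h1 g0 hg0; have e2 := h2 g0 hg0; have e3 := hchi g0.
  rewrite hpsiI // mul1r omprodT // e1 e2 ch1E // ch2E // -/w in e3.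
  have hA : w ^ (Om0 p (E1 a b J x)) = w ^ (Om0 p n + Om0 p (E2 e a b J x)).
    rewrite exprzDr // -e3 divfK //; by rewrite expfz_eq0 negb_and hw0 orbT.
  have h1w : w ^ (Om0 p (E1 a b J x) - (Om0 p n + Om0 p (E2 e a b J x))) = 1.
    rewrite exprzDr // -invr_expz hA mulfV //; by rewrite expfz_eq0 negb_and hw0 orbT.
  have hord : forall m, w ^+ m = 1 -> (#|k|.-1 %| m)%N.
    move=> m; rewrite /w hom -rmorphXn -(rmorph1 tau0) => /fmorph_inj; exact: hzord.
  have := W_ord hord h1w; rewrite -hNN /Cp.
  congr (_ %| _)%Z; rewrite -Om0D -Om0B; apply: Om0_ext => i.
  rewrite /E1 /E2 /eps /D /c; case: (i \in J); ring.
have hcases := rJc_cases hok.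
have hR : (forall t, rng p (r t)) /\ Cp p J c r.
  case: hcases => [[hpos he1]|[h0 he1]].
    split.
      move=> t; rewrite /r he1; have := y0_bounds J t hcb; have := hpos t.
      rewrite /rng; case: (t \in J) => ? /andP[? ?]; apply/andP; split; lia.
    rewrite /Cp /r (Om0_ext _ (m2 := fun t => eps J t * y0 p J c t - c t)); first exact: y0_C.
    by move=> i; rewrite he1.
  have [g1 [g2 _]] := greedy hp hf hcb h0.
  split; first by move=> t; rewrite /r he1.
  rewrite /Cp /r (Om0_ext _ (m2 := fun t => eps J t * ysteps p J c t0 f t - c t)) //.
  by move=> i; rewrite he1.
have [hRr hRC] := hR.
have hd : (NN p f %| Om0 p (fun t => eps J t * (D t - r t)))%Z.
  rewrite (Om0_ext _ (m2 := fun t => (eps J t * D t - c t) - (eps J t * r t - c t))); last by move=> i; ring.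
  rewrite Om0B; exact: rpredB.
have hb : forall t, - (p%:Z - 1) <= eps J t * (D t - r t) <= p%:Z - 1.
  move=> t; move: (hRr t) (hab t); rewrite /rng /eps /D => /andP[a1 a2] /andP[b1 b2].
  by case: (t \in J); apply/andP; split; lia.
have hD : forall t, 1 <= D t <= p%:Z by move=> t; have := hab t; rewrite /D => /andP[? ?]; apply/andP; split; lia.
have conclL : (forall t, D t = r t) -> (exc -> (forall t, a t - b t + 1 = r t) \/ (forall t, a t - b t + 1 = p%:Z)) /\
     (~ exc -> forall t, a t - b t + 1 = r t).
  by move=> h; split => [_|_]; [left|]; exact: h.
have conclR : exc -> (forall t, D t = p%:Z) -> (exc -> (forall t, a t - b t + 1 = r t) \/ (forall t, a t - b t + 1 = p%:Z)) /\
     (~ exc -> forall t, a t - b t + 1 = r t).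
  by move=> hex h; split => [_|hn']; [right; exact: h| case: (hn' hex)].
case: (three_cases hp hf hb hd) => [hu|[hu|hu]].
- apply: conclL => t; have := hu t; rewrite /eps; case: (t \in J) => ?; lia.
-
  have ha : forall t, if t \in J then D t = p%:Z /\ r t = 1 else D t = 1 /\ r t = p%:Z.
    move=> t; have := hu t; have := hD t; have := hRr t; rewrite /eps /rng.
    by case: (t \in J) => /andP[? ?] /andP[? ?] ?; split; lia.
  case: (eqVneq J setT) => [hJT|hJT].
  + have hr1 : forall t, r t = 1 by move=> t; have := ha t; rewrite hJT inE => -[].
    have hw : forall t, - (p%:Z - 1) <= eps J t * r t - c t <= p%:Z - 1.
      move=> t; rewrite hr1 /eps hJT inE; have := hcb t => /andP[? ?]; apply/andP; split; lia.
    have hc1' : forall t, c t = 1.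
      case: (three_cases hp hf hw hRC) => [hv|[hv|hv]] t.
      * have := hv t; rewrite hr1 /eps hJT inE; lia.
      * exfalso; have := hv t; have := hcb t; rewrite hr1 /eps hJT inE => /andP[? ?]; lia.
      * exfalso; have := hv t; have := hcb t; rewrite hr1 /eps hJT inE => /andP[? ?]; lia.
    apply: conclR.
    * left; split => // t; have := hc1' t; have := hwg t; have := hx t.
      by rewrite /c => /andP[? ?] /andP[? ?] ?; split; lia.
    * by move=> t; have := ha t; rewrite hJT inE => -[].
  + exfalso; have [t ht] := notT_ex hJT.
    have [_ hrt] : D t = 1 /\ r t = p%:Z by have := ha t; rewrite (negbTE ht).
    case: hcases => [[hpos he1]|[h0 he1]].
    * have := y0_bounds J t hcb; rewrite (negbTE ht) -(he1 t) -/r hrt => /andP[? ?]; lia.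
    * have [nJ [npJ _]] := y0_zero hcb h0.
      have [_ [_ [_ G3]]] := greedy hp hf hcb h0.
      have hr0 : r t0 = p%:Z by have := ha t0; rewrite (negbTE nJ) => -[].
      have hrp : r (ord_pred t0) = p%:Z by have := ha (ord_pred t0); rewrite (negbTE npJ) => -[].
      rewrite /r !he1 in hr0 hrp; have := G3 hrp; lia.
-
  have hb' : forall t, if t \in J then D t = 1 /\ r t = p%:Z else D t = p%:Z /\ r t = 1.
    move=> t; have := hu t; have := hD t; have := hRr t; rewrite /eps /rng.
    by case: (t \in J) => /andP[? ?] /andP[? ?] ?; split; lia.
  case: (eqVneq J setT) => [hJT|hJT].
  + exfalso; have [_ hrt] : D t1 = 1 /\ r t1 = p%:Z by have := hb' t1; rewrite hJT inE.
    case: hcases => [[hpos he1]|[h0 he1]].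
    * have : y0 p J c t1 = c t1 by rewrite /y0 hJT !inE.
      have := hcb t1; rewrite -(he1 t1) -/r hrt => /andP[? ?]; lia.
    * by have [nJ _] := y0_zero hcb h0; rewrite hJT inE in nJ.
  case: (eqVneq J set0) => [hJ0|hJ0].
  + have hDp : forall t, D t = p%:Z by move=> t; have := hb' t; rewrite hJ0 inE => -[].
    have hr1 : forall t, r t = 1 by move=> t; have := hb' t; rewrite hJ0 inE => -[].
    case: hcases => [[hpos he1]|[h0 he1]].
    * apply: conclR => //; right; split => // t.
      have : y0 p J c t = 1 by rewrite -(he1 t) -/r hr1.
      rewrite /y0 hJ0 !inE; have := hwg t; have := hx t.
      by rewrite /c => /andP[? ?] /andP[? ?] ?; split; lia.
    * exfalso; have [_ [_ [G4 _]]] := greedy hp hf hcb h0.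
      rewrite -he1 -/r hr1 in G4.
      have hp2 : p = 2%N by lia.
      have hdiff : forall i, E1 a b setT x i - E1 a b J x i = 2.
        move=> i; have := hDp i; rewrite /E1 /D hJ0 !inE hp2; lia.
      have hNp := Npos hp hf.
      have := @bigger _ _ tau0 p f e G I om chi1 chi2 a b J x setT hk hom0 hmax.
      rewrite (Om0_ext _ hdiff); move: hdiff hNp; rewrite hp2 => hdiff hNp.
      rewrite Om0_const2 => /(_ (dvdz_mull _ (dvdzz _))) h.
      have : setT = J.
        apply: h => t; rewrite (Omega_ext _ _ hdiff) Omega_const2; split; first by rewrite /NN; lia.
        exact: dvdz_mull (dvdzz _).
      by move=> hT; move: (in_setT t1); rewrite hT hJ0 inE.
  + exfalso; have [t [ht hst]] := boundary hJ0 hJT.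
    have [hDt _] : D t = p%:Z /\ r t = 1 by have := hb' t; rewrite (negbTE ht).
    have [hDs _] : D (ordS t) = 1 /\ r (ordS t) = p%:Z by have := hb' (ordS t); rewrite hst.
    have hne : ordS t != t by apply/eqP => e'; move: hst; rewrite e' (negbTE ht).
    pose J' := (t |: J) :\ ordS t.
    have hdiff : forall v, E1 a b J' x v - E1 a b J x v =
        if v == t then p%:Z else if v == ordS t then -1 else 0.
      move=> v; rewrite /E1 /J' !inE; case: (eqVneq v t) => [->|hvt].
        rewrite eq_sym (negbTE hne) (negbTE ht) /=; move: hDt; rewrite /D; lia.
      case: (eqVneq v (ordS t)) => [->|hvs].
        rewrite hst /=; move: hDs; rewrite /D; lia.
      by case: (v \in J); rewrite /= ?subrr.
    have hNp := Npos hp hf.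
    have hfl : forall u, 0 <= Omega p (fun v => E1 a b J' x v - E1 a b J x v) u /\
        (NN p f %| Omega p (fun v => E1 a b J' x v - E1 a b J x v) u)%Z.
      move=> u; rewrite (Omega_ext _ _ hdiff).
      by case: (Omega_flip p u hf hne) => ->; split; rewrite ?dvdz0 ?dvdzz //; apply: ltW.
    have hd0 : (NN p f %| Om0 p (fun v => E1 a b J' x v - E1 a b J x v))%Z.
      by rewrite (@Om0_Omega p f _ t1) //; case: (hfl t1).
    have := @bigger _ _ tau0 p f e G I om chi1 chi2 a b J x J' hk hom0 hmax hd0 hfl.
    move=> hJ'; have : t \in J' by rewrite /J' !inE eqxx orTb andbT eq_sym.
    by rewrite hJ' (negbTE ht).
Qed.
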